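(* Let $\mathcal{H}$ be a real Hilbert space, let $T\ge 1$ be an integer, and let $\Psi:\mathcal{H}\to\mathbb{R}$ be a convex function. Consider any algorithm for the player in the online linear optimization game of $T$ rounds, and let $\hat{\epsilon}\in\mathbb{R}$ be a constant. The algorithm guarantees \[ \operatorname{Reward}\ \ge\ \Psi(-g_{1:T})-\hat{\epsilon}\qquad\text{for every sequence } g_1,\dots,g_T \] if and only if it guarantees \[ \operatorname{Regret}(u)\ \le\ \Psi^*(u)+\hat{\epsilon}\qquad\text{for every sequence } g_1,\dots,g_T \text{ and all } u\in\mathcal{H}. \]
   Context: Online linear optimization game: on rounds $t=1,\dots,T$ the player chooses $w_t\in\mathcal{H}$ (possibly depending on $g_1,\dots,g_{t-1}$), then an adversary chooses $g_t\in\mathcal{G}\subseteq\mathcal{H}$, and the player suffers loss $\langle w_t,g_t\rangle$. Write $g_{1:t}=\sum_{s=1}^t g_s$. Define $\operatorname{Reward}=\sum_{t=1}^T\langle -g_t,w_t\rangle$ and, for a comparator $u\in\mathcal{H}$, $\operatorname{Regret}(u)=\sum_{t=1}^T\langle g_t,w_t-u\rangle$. For a function $f$ with domain $S\subseteq\mathcal{H}$, its Fenchel conjugate is $f^*(u)=\sup_{v\in S}(\langle v,u\rangle-f(v))$.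
   Formalization: Ψ is taken to be lower semicontinuous in the norm topology of $\mathcal{H}$ as well as convex. The paper assumes this as well. *)

(* Defs.v *)
From HB Require Import structures.
From mathcomp Require Import all_boot all_order all_algebra.
From mathcomp Require Import all_classical all_reals all_analysis.
Set Implicit Arguments. Unset Strict Implicit. Unset Printing Implicit Defensive.
Import Order.TTheory GRing.Theory Num.Theory.
Import numFieldNormedType.Exports.
Local Open Scope classical_set_scope.
Local Open Scope ring_scope.

(* [ip] is an inner product on the real normed space [H] inducing its norm;
   together with completeness of [H] this makes [H] a real Hilbert space. *)
Definition is_inner_product (R : realType) (H : normedModType R)
    (ip : H -> H -> R) : Prop :=
  [/\ forall x y, ip x y = ip y x,
      forall a x y z, ip (a *: x + y) z = a * ip x z + ip y z
    & forall x, ip x x = `|x| ^+ 2].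

Definition convex_fun (R : realType) (H : normedModType R) (f : H -> R) : Prop :=
  forall (x y : H) (t : R), 0 <= t -> t <= 1 ->
    f (t *: x + (1 - t) *: y) <= t * f x + (1 - t) * f y.

Definition lsc_fun (R : realType) (H : normedModType R) (f : H -> R) : Prop :=
  forall (x : H) (a : R), a < f x ->
    exists2 d : R, 0 < d & forall y : H, `|y - x| < d -> a < f y.

Definition fenchel_conj (R : realType) (H : normedModType R)
    (ip : H -> H -> R) (f : H -> R) (u : H) : \bar R :=
  ereal_sup [set ((ip v u - f v)%:E) | v in [set: H]].

(* A (deterministic) player algorithm maps the history g_1..g_{t-1} to w_t.
   Rounds are indexed 0..T-1; the play at round t is alg [:: g 0; ...; g (t-1)]. *)
Definition play (R : realType) (H : normedModType R)
    (alg : seq H -> H) (g : nat -> H) (t : nat) : H :=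
  alg [seq g s | s <- iota 0 t].

Definition reward (R : realType) (H : normedModType R) (ip : H -> H -> R)
    (alg : seq H -> H) (T : nat) (g : nat -> H) : R :=
  \sum_(t < T) ip (- g t) (play alg g t).

Definition regret (R : realType) (H : normedModType R) (ip : H -> H -> R)
    (alg : seq H -> H) (T : nat) (g : nat -> H) (u : H) : R :=
  \sum_(t < T) ip (g t) (play alg g t - u).

Definition gsum (R : realType) (H : normedModType R) (T : nat) (g : nat -> H) : H :=
  \sum_(t < T) g t.

(* Main.v *)
Require Import Defs.
From HB Require Import structures.
From mathcomp Require Import all_boot all_order all_algebra.
From mathcomp Require Import all_classical all_reals all_analysis.
From mathcomp Require Import ring lra.
Import Order.TTheory GRing.Theory Num.Theory.
Import numFieldNormedType.Exports.
Local Open Scope classical_set_scope.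
Local Open Scope ring_scope.
Set Implicit Arguments.

Section IP.
Variables (R : realType) (H : normedModType R) (ip : H -> H -> R).
Hypothesis Hip : is_inner_product ip.

Lemma ipC x y : ip x y = ip y x. Proof. by case: Hip. Qed.
Lemma ipL a x y z : ip (a *: x + y) z = a * ip x z + ip y z.
Proof. by case: Hip. Qed.
Lemma ipN2 x : ip x x = `|x| ^+ 2. Proof. by case: Hip. Qed.
Lemma ip0l z : ip 0 z = 0.
Proof.
have := ipL 1 0 0 z; rewrite scaler0 addr0 mul1r => h; lra.
Qed.
Lemma ipDl x y z : ip (x + y) z = ip x z + ip y z.
Proof. by rewrite -[x in LHS]scale1r ipL mul1r. Qed.
Lemma ipZl a x z : ip (a *: x) z = a * ip x z.
Proof. by rewrite -[a *: x]addr0 ipL ip0l addr0. Qed.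
Lemma ipNl x z : ip (- x) z = - ip x z.
Proof. by rewrite -scaleN1r ipZl mulN1r. Qed.
Lemma ipBl x y z : ip (x - y) z = ip x z - ip y z.
Proof. by rewrite ipDl ipNl. Qed.
Lemma ipDr x y z : ip z (x + y) = ip z x + ip z y.
Proof. by rewrite ipC ipDl !(ipC z). Qed.
Lemma ipZr a x z : ip z (a *: x) = a * ip z x.
Proof. by rewrite ipC ipZl ipC. Qed.
Lemma ipNr x z : ip z (- x) = - ip z x.
Proof. by rewrite ipC ipNl ipC. Qed.
Lemma ipBr x y z : ip z (x - y) = ip z x - ip z y.
Proof. by rewrite ipDr ipNr. Qed.
Lemma ip_suml I (r : seq I) (P : pred I) (F : I -> H) u :
  ip (\sum_(i <- r | P i) F i) u = \sum_(i <- r | P i) ip (F i) u.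
Proof.
by apply: (big_morph (fun p => ip p u)) => [p q|]; [exact: ipDl|exact: ip0l].
Qed.
End IP.
Unset Implicit Arguments.
Lemma small_t (R : realType) (A B : R) : 0 <= B ->
  (forall t, 0 < t -> t <= 1 -> 0 <= A + t * B) -> 0 <= A.
Proof.
move=> B0 h; rewrite leNgt; apply/negP => A0.
have den : 0 < 2 * B + 1 - A by lra.
have := h (- A / (2 * B + 1 - A)).
rewrite divr_gt0 ?oppr_gt0 // => /(_ isT).
rewrite ler_pdivrMr // mul1r => /(_ ltac:(lra)).
rewrite mulrAC -[X in 0 <= _ + X]mulrA.
set k := B / _.
have k0 : k * 2 < 1.
  by rewrite /k mulrAC ltr_pdivrMr // mul1r; lra.
have k1 : 0 <= k by rewrite /k divr_ge0 // ltW.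
nra.
Qed.
Lemma arch_inv (R : realType) (e : R) : 0 < e ->
  exists N, forall n, (N <= n)%N -> 1 / (n.+1)%:R < e.
Proof.
move=> e0; exists (Num.Def.archi_bound (1 / e)) => n hn.
have h := archi_boundP (ltW (divr_gt0 ltr01 e0)).
have hn' : (Num.Def.archi_bound (1 / e))%:R <= n%:R :> R by rewrite ler_nat.
have hn1 : n%:R < n.+1%:R :> R by rewrite ltr_nat.
rewrite ltr_pdivrMr ?ltr0Sn //.
rewrite ltr_pdivrMr // in h; nra.
Qed.

Section Vec.
Variables (R : realType) (H : normedModType R).
Lemma vid1 (t : R) (v x : H) : t *: v + (1 - t) *: x - x = t *: (v - x).
Proof.
by rewrite scalerBl scale1r scalerBr addrCA -addrA addrC -addrA addNr addr0 addrC.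
Qed.
Lemma vid2 (p q x : H) : (1/2 : R) *: p + (1 - 1/2) *: q - x =
  (1/2 : R) *: (p - x) + (1/2 : R) *: (q - x).
Proof.
have h : (1 - 1/2 : R) = 1/2 by field.
rewrite h -!scalerDr.
have -> : p - x + (q - x) = p + q - (x + x) by rewrite addrACA opprD.
have hx : (1/2 : R) *: (x + x) = x.
  by rewrite scalerDr -scalerDl -[RHS]scale1r; congr (_ *: _); field.
by rewrite scalerBr hx.
Qed.
End Vec.

Section Vec2.
Variables (R : realType) (H : normedModType R).
Lemma vid3 (t : R) (v y x : H) : t *: v + (1 - t) *: y - x = (y - x) + t *: (v - y).
Proof. by rewrite -vid1 [RHS]addrC [RHS]addrA subrK. Qed.
Lemma vid4 (p q x : H) : p - q = (p - x) - (q - x).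
Proof. by rewrite opprB addrA subrK. Qed.
End Vec2.

Lemma minorant (R : realType) (H : completeNormedModType R)
  (ip : H -> H -> R) (Hip : is_inner_product ip)
  (Psi : H -> R) (Pconv : convex_fun Psi) (Plsc : lsc_fun Psi) (x : H) (a : R) :
  a < Psi x -> exists u, forall v, a + ip (v - x) u <= Psi v.
Proof.
move=> ax.
have [d d0 hd] := Plsc x a ax.
set del := Psi x - a.
have del0 : 0 < del by rewrite /del subr_gt0.
set K := 2 * del / d.
have K0 : 0 < K by rewrite /K divr_gt0 // mulr_gt0.
have lb : forall v, Psi x - del - K * `|v - x| <= Psi v.
  move=> v; case: (ltP `|v - x| d) => hv.
    have := hd v hv; have : 0 <= K * `|v - x| by rewrite mulr_ge0 // ltW.
    rewrite /del; lra.
  set r := `|v - x| in hv *.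
  have r0 : 0 < r by apply: lt_le_trans hv.
  set t := d / (2 * r).
  have t0 : 0 < t by rewrite /t divr_gt0 // mulr_gt0.
  have t1 : t <= 1 by rewrite /t ler_pdivrMr ?mulr_gt0 //; lra.
  have tKr : t * (K * r) = del by rewrite /t /K; field; apply/andP; split; rewrite gt_eqF.
  have hz : a < Psi (t *: v + (1 - t) *: x).
    apply: hd; rewrite vid1 normrZ ger0_norm ?ltW //.
    have -> : t * r = d / 2 by rewrite /t; field; rewrite gt_eqF.
    lra.
  have := Pconv v x t (ltW t0) t1.
  move=> hc; have hc2 : t * (Psi x - del - K * r) <= t * Psi v.
    rewrite mulrBr mulrBr tKr; rewrite /del in hz *; nra.
  by rewrite ler_pM2l in hc2.
set c := 4 * del / d ^+ 2.
have c0 : 0 < c by rewrite /c divr_gt0 ?exprn_gt0 // mulr_gt0.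
pose F v := Psi v + c * `|v - x| ^+ 2.
have Flb : forall v, Psi x - 2 * del <= F v.
  move=> v; have := lb v; rewrite /F.
  set r := `|v - x|.
  have e1 : c * r ^+ 2 = 4 * del * (r / d) ^+ 2.
    by rewrite /c; field; rewrite gt_eqF.
  have e2 : K * r = 2 * del * (r / d) by rewrite /K; field; rewrite gt_eqF.
  rewrite e1 e2 => h.
  have : 0 <= del * (2 * (r / d) - 1/2) ^+ 2 by rewrite mulr_ge0 ?sqr_ge0 // ltW.
  nra.
set E := range F.
have Einf : has_inf E.
  split; first by exists (F x), x.
  by exists (Psi x - 2 * del) => _ [v _ <-]; exact: Flb.
set m := inf E.
have hm : forall v, m <= F v.
  by move=> v; apply: (ge_inf Einf.2); exists v.
have hadh : forall n : nat, exists v, F v < m + 1 / (n.+1)%:R.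
  move=> n; have [_ [v _ <-] hv] := inf_adherent (divr_gt0 ltr01 (ltr0Sn R n)) Einf.
  by exists v.
have [vs hvs] := choice hadh.
have hmid : forall p q, `|p - q| ^+ 2 <= 2 * ((F p - m) + (F q - m)) / c.
  move=> p q.
  have h1 := hm ((1/2 : R) *: p + (1 - 1/2) *: q).
  have h2 := Pconv p q (1/2 : R) ltac:(lra) ltac:(lra).
  rewrite /F vid2 in h1; rewrite /F (@vid4 _ _ p q x).
  rewrite -!(ipN2 Hip) in h1 *.
  move: h1; move: (p - x) (q - x) => P Q h1.
  rewrite !(ipDl Hip, ipDr Hip, ipZl Hip, ipZr Hip, ipBl Hip, ipBr Hip, ipNl Hip, ipNr Hip) in h1 *.
  rewrite (ipC Hip Q P) in h1 *.
  rewrite ler_pdivlMr //.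
  nra.
have cauchyv : cauchy (vs @ \oo).
  apply: cauchy_exP => eps eps0.
  have ce : 0 < c * eps ^+ 2 / 4.
    by apply: divr_gt0 => //; apply: mulr_gt0 => //; apply: exprn_gt0.
  have [N hN] := @arch_inv _ _ ce.
  exists (vs N); exists N => // n /= hn.
  rewrite -ball_normE /ball_ /=.
  have h := hmid (vs N) (vs n); rewrite ler_pdivlMr // in h.
  have := hvs N; have := hvs n; have := hN N (leqnn N); have := hN n hn.
  have := hm (vs N); have := hm (vs n).
  move=> hA hB hC hD hE hF.
  have h3 : c * `|vs N - vs n| ^+ 2 < c * eps ^+ 2. clear -h hC hD hE hF. clearbody F m c. move: hC hD hE hF; move: (1 / N.+1%:R) (1 / n.+1%:R) => i1 i2 hC hD hE hF. lra.
  have hx2 : `|vs N - vs n| ^+ 2 < eps ^+ 2 by rewrite ltr_pM2l in h3.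
  have := normr_ge0 (vs N - vs n); nra.
have cv : cvg (vs @ \oo) by apply: cauchy_cvg.
set y := lim (vs @ \oo) in cv.
have hFy : F y <= m.
  rewrite leNgt; apply/negP => my.
  set eta := (F y - m) / 3.
  have eta0 : 0 < eta by rewrite /eta divr_gt0 // subr_gt0.
  have [d' d'0 hd'] := Plsc y (Psi y - eta) ltac:(lra).
  set R0 := `|y - x|.
  have R00 : 0 <= R0 by apply: normr_ge0.
  have den : 0 < 2 * c * (R0 + 1) by apply: mulr_gt0; [apply: mulr_gt0|]; lra.
  set s := Num.min d' (eta / (2 * c * (R0 + 1))).
  have s0 : 0 < s by rewrite /s lt_min d'0 divr_gt0.
  have hs1 : s <= d' by rewrite /s ge_min lexx.
  have hs2 : s <= eta / (2 * c * (R0 + 1)) by rewrite /s ge_min lexx orbT.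
  rewrite ler_pdivlMr // in hs2.
  have hcs : 2 * c * s * R0 <= eta by nra.
  have [N1 _ hN1] := cvgr_dist_lt _ _ cv _ s0.
  have [N2 hN2] := @arch_inv _ _ eta0.
  set n := maxn N1 N2.
  have h1 : `|y - vs n| < s by apply: hN1; rewrite /= leq_maxl.
  have h2 := hN2 n (leq_maxr N1 N2).
  have h3 : Psi y - eta < Psi (vs n).
    by apply: hd'; rewrite distrC; apply: lt_le_trans hs1.
  have h4 := ler_distD (vs n) y x; rewrite -/R0 in h4.
  have h5 := hvs n.
  rewrite /F in h5 my.
  move: h2 h5; move: (1 / n.+1%:R) => i h2 h5.
  set q := `|vs n - x| in h4 h5.
  set s' := `|y - vs n| in h1 h4.
  have q0 : 0 <= q by apply: normr_ge0.
  have hq : R0 ^+ 2 - 2 * s * R0 <= q ^+ 2.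
    case: (lerP (R0 - s') 0) => hr.
      have : R0 * (R0 - 2 * s) <= 0 by nra.
      have := sqr_ge0 q; nra.
    have : (R0 - s') ^+ 2 <= q ^+ 2 by nra.
    nra.
  have : eta * 3 = F y - m by rewrite /eta -mulrA mulVf ?mulr1 // pnatr_eq0.
  rewrite /F -/R0 => ?.
  nra.
have opt : forall v, 0 <= Psi v - Psi y + 2 * c * ip (y - x) (v - y).
  move=> v; apply: (@small_t _ _ (c * `|v - y| ^+ 2)).
    by rewrite mulr_ge0 ?sqr_ge0 // ltW.
  move=> t t0 t1.
  have h1 := hm (t *: v + (1 - t) *: y).
  have h2 := Pconv v y t (ltW t0) t1.
  rewrite /F vid3 in h1.
  have hFy' := hFy; rewrite /F in hFy'.
  rewrite -!(ipN2 Hip) in h1 hFy' *.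
  move: h1 hFy'; move: (y - x) (v - y) => Y D h1 hFy'.
  rewrite !(ipDl Hip, ipDr Hip, ipZl Hip, ipZr Hip) in h1.
  rewrite (ipC Hip D Y) in h1.
  rewrite -(pmulr_rge0 _ t0).
  nra.
have hy : `|y - x| < d.
  have hFx := hm x.
  rewrite /F subrr normr0 expr0n /= mulr0 addr0 in hFx.
  have := lb y.
  have hFy' := hFy; rewrite /F in hFy'.
  set r := `|y - x| in hFy' *.
  have r0 : 0 <= r by apply: normr_ge0.
  have e1 : c * r ^+ 2 = 4 * del * (r / d) ^+ 2.
    by rewrite /c; field; rewrite gt_eqF.
  have e2 : K * r = 2 * del * (r / d) by rewrite /K; field; rewrite gt_eqF.
  rewrite e2 => h; rewrite e1 in hFy'.
  have hlt : r / d < 1.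
    move: h hFy'; move: (r / d) => e h hFy'.
    rewrite ltNge; apply/negP => e1'.
    have : del * e <= del * e ^+ 2 by rewrite ler_pM2l // expr2 ler_peMr //; lra.
    nra.
  by rewrite ltr_pdivrMr // mul1r in hlt.
have ay := hd y hy.
exists ((2 * c) *: (x - y)) => v.
have := opt v.
have e1 : v - y = (v - x) + (x - y) by rewrite addrA subrK.
have e2 : y - x = - (x - y) by rewrite opprB.
rewrite e1 e2.
have := normr_ge0 (x - y).
rewrite -[`|x - y|]ger0_norm ?normr_ge0 // => _.
have hq : 0 <= ip (x - y) (x - y) by rewrite (ipN2 Hip) sqr_ge0.
move: hq; move: (v - x) (x - y) => P Q hq.
rewrite !(ipDl Hip, ipDr Hip, ipZl Hip, ipZr Hip, ipNl Hip, ipNr Hip).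
rewrite (ipC Hip Q P).
nra.
Qed.

Lemma regret_eq (R : realType) (H : normedModType R) (ip : H -> H -> R)
  (Hip : is_inner_product ip) alg T g u :
  regret ip alg T g u = - reward ip alg T g + ip (- gsum T g) u.
Proof.
rewrite /regret /reward /gsum (ipNl Hip) (ip_suml Hip).
rewrite -!sumrN -big_split /=.
by apply: eq_bigr => i _; rewrite (ipBr Hip) (ipNl Hip) opprK.
Qed.

Theorem theorem1 (R : realType) (H : completeNormedModType R)
  (ip : H -> H -> R) (Hip : is_inner_product ip)
  (G : set H) (T : nat) (HT : (1 <= T)%N)
  (Psi : H -> R) (Pconv : convex_fun Psi) (Plsc : lsc_fun Psi)
  (alg : seq H -> H) (eps : R) :
  (forall g : nat -> H, (forall t, (t < T)%N -> G (g t)) ->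
     reward ip alg T g >= Psi (- gsum T g) - eps)
  <->
  (forall g : nat -> H, (forall t, (t < T)%N -> G (g t)) ->
     forall u : H, ((regret ip alg T g u)%:E <= fenchel_conj ip Psi u + eps%:E)%E).
Proof.
split.
- move=> hR g hg u; rewrite (@regret_eq _ _ _ Hip).
  have hfc : ((ip (- gsum T g) u - Psi (- gsum T g))%:E <= fenchel_conj ip Psi u)%E.
    by apply: ereal_sup_ubound; exists (- gsum T g).
  apply: (le_trans _ (leeD2r (eps%:E) hfc)).
  rewrite -EFinD lee_fin.
  have := hR g hg; lra.
- move=> hR g hg.
  rewrite leNgt; apply/negP => hlt.
  set x := - gsum T g in hlt.
  set a := (Psi x + (reward ip alg T g + eps)) / 2.
  have ax : a < Psi x by rewrite /a; lra.
  have [u hu] := @minorant R H ip Hip Psi Pconv Plsc x a ax.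
  have hfc : (fenchel_conj ip Psi u <= (ip x u - a)%:E)%E.
    apply: ge_ereal_sup => _ [v _ <-]; rewrite lee_fin.
    have := hu v; rewrite (ipBl Hip); lra.
  have := le_trans (hR g hg u) (leeD2r (eps%:E) hfc).
  rewrite -EFinD lee_fin (@regret_eq _ _ _ Hip) -/x.
  rewrite /a; lra.
Qed.
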